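(* In the setting of the context, let $\{\mu_k\}_{k\in\mathbb{N}}$ be a strictly decreasing sequence of positive scalars and $\{w_k\}_{k\in\mathbb{N}}$ a sequence with $\|F^{\mu_k}(w_{k+1})\|\le\epsilon(\mu_k)$ for all $k$, such that for a subsequence indexed by $\mathcal K$, $w_{k+1}\to w^*$ as $k\in\mathcal K\to\infty$. Then for all $k\in\mathcal K$ sufficiently large, $$w^{w^*,1}_{k+1}=w_{k+1}-J_F(w_{k+1})^{-1}F^{\mu_{k+1}}(w_{k+1}),$$ i.e. $w^{w^*,1}_{k+1}-w_{k+1}$ is the Newton step for finding a root of $F^{\mu_{k+1}}$ at $w_{k+1}$.
   Context: Problem: minimize $f(x)$ subject to $c_{\mathcal I}(x)\ge0$, $c_{\mathcal E}(x)=0$, with $f,c_i\colon\mathbb{R}^n\to\mathbb{R}$, $c=(c_{\mathcal I}^T,c_{\mathcal E}^T)^T\in\mathbb{R}^m$, and $d\ge3$ the smallest number of times each of $f,c_1,\dots,c_m$ is continuously differentiable. Notation: $g=\nabla f$, $A$ the Jacobian of $c$, $H(x,\lambda)$ the Hessian in $x$ of $f(x)-\lambda^Tc(x)$, $[v]_S$ components of $v$ indexed by $S$, uppercase = diagonal matrix of the lowercase vector, $e$ the all-ones vector, $w=(x,\lambda)$. $F^\mu(x,\lambda)=\bigl(g(x)-A(x)^T\lambda;\ C_{\mathcal I}(x)[\lambda]_{\mathcal I}-\mu e;\ c_{\mathcal E}(x)\bigr)$ and $J_F$ denotes its Jacobian with respect to $w$ (independent of $\mu$). Let $x^*$ be a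 KKT point at which LICQ, strict complementarity (multiplier $\lambda^*$ with $[\lambda^*]_i>0$ for active inequality indices) and the strong second-order sufficiency condition ($p^TH(x^*,\lambda^* )p\ge\omega\|p\|^2$, $\omega>0$, for all $p$ orthogonal to all active constraint gradients) hold; $\lambda^*$ is unique; $w^*=(x^*,\lambda^* )$. Let $w^{w^*,0}$ be the locally unique $(d-1)$ times continuously differentiable function near $0$ with $F^0(w^{w^*,0}(r))=r$, $w^{w^*,0}(0)=w^*$. With $\mathrm{nml}(r)=r/\|r\|$ for $r\ne0$, $\mathrm{nml}(0)=0$, define for $\mu,r$ sufficiently small $w^{w^*,\mu,r}(\rho)=w^{w^*,0}\bigl(\rho\,\mathrm{nml}(r)+(0,\mu e^T,0)^T\bigr)$ (blocks of sizes $n,m_{\mathcal I},m_{\mathcal E}$). Set $r_{k+1}=F^{\mu_{k+1}}(w_{k+1})$ and let $w^{w^*,1}_{k+1}$ be the value at $\rho=0$ of the first-order Taylor polynomial of $\rho\mapsto w^{w^*,\mu_{k+1},r_{k+1}}(\rho)$ about $\rho=\|r_{k+1}\|$. $\epsilon$ is a positive function with $\epsilon(\mu)=\Theta(\mu)$. *)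

(* Defs.v *)
From HB Require Import structures.
From mathcomp Require Import all_boot all_order all_algebra.
From mathcomp Require Import all_classical all_reals all_analysis.
Set Implicit Arguments. Unset Strict Implicit. Unset Printing Implicit Defensive.
Import Order.TTheory GRing.Theory Num.Theory.
Import numFieldNormedType.Exports.
Local Open Scope classical_set_scope.
Local Open Scope ring_scope.

Definition ebasis (R : realType) (p : nat) (i : 'I_p) : 'cV[R]_p := delta_mx i 0.

Definition enorm (R : realType) (p : nat) (v : 'cV[R]_p) : R :=
  Num.sqrt (\sum_(i < p) v i 0 ^+ 2).

Definition nml (R : realType) (p : nat) (r : 'cV[R]_p) : 'cV[R]_p :=
  if r == 0 then 0 else (enorm r)^-1 *: r.

Fixpoint CkOn (R : realType) (p : nat) (W : normedModType R) (k : nat)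
  (U : set 'cV[R]_p) (f : 'cV[R]_p -> W) {struct k} : Prop :=
  match k with
  | 0 => forall x, U x -> {for x, continuous f}
  | k'.+1 => (forall x, U x -> differentiable f x) /\
             forall j : 'I_p, CkOn k' U (fun x => 'D_(ebasis R j) f x)
  end.

Definition jac (R : realType) (p q : nat) (G : 'cV[R]_p -> 'cV[R]_q)
  (w : 'cV[R]_p) : 'M[R]_(q, p) :=
  \matrix_(i, j) ('D_(ebasis R j) G w) i 0.

Definition grad (R : realType) (p : nat) (phi : 'cV[R]_p -> R) (x : 'cV[R]_p)
  : 'cV[R]_p := \col_i ('D_(ebasis R i) phi x).

Definition hess (R : realType) (p : nat) (phi : 'cV[R]_p -> R) (x : 'cV[R]_p)
  : 'M[R]_p := jac (grad phi) x.

Definition cfun (R : realType) (n mI mE : nat) (cI : 'cV[R]_n -> 'cV[R]_mI)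
  (cE : 'cV[R]_n -> 'cV[R]_mE) (x : 'cV[R]_n) : 'cV[R]_(mI + mE) :=
  col_mx (cI x) (cE x).

Definition Amat (R : realType) (n mI mE : nat) (cI : 'cV[R]_n -> 'cV[R]_mI)
  (cE : 'cV[R]_n -> 'cV[R]_mE) (x : 'cV[R]_n) : 'M[R]_(mI + mE, n) :=
  jac (cfun cI cE) x.

Definition Hlag (R : realType) (n mI mE : nat) (f : 'cV[R]_n -> R)
  (cI : 'cV[R]_n -> 'cV[R]_mI) (cE : 'cV[R]_n -> 'cV[R]_mE)
  (x : 'cV[R]_n) (lam : 'cV[R]_(mI + mE)) : 'M[R]_n :=
  hess (fun y => f y - (lam^T *m cfun cI cE y) 0 0) x.

Definition Fmu (R : realType) (n mI mE : nat) (f : 'cV[R]_n -> R)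
  (cI : 'cV[R]_n -> 'cV[R]_mI) (cE : 'cV[R]_n -> 'cV[R]_mE) (mu : R)
  (w : 'cV[R]_(n + (mI + mE))) : 'cV[R]_(n + (mI + mE)) :=
  let x := usubmx w in
  let lam := dsubmx w in
  col_mx (grad f x - (Amat cI cE x)^T *m lam)
         (col_mx (\col_i (cI x i 0 * usubmx lam i 0 - mu)) (cE x)).

(* J_F: Jacobian of F^mu with respect to w (independent of mu; we use mu = 0) *)
Definition JF (R : realType) (n mI mE : nat) (f : 'cV[R]_n -> R)
  (cI : 'cV[R]_n -> 'cV[R]_mI) (cE : 'cV[R]_n -> 'cV[R]_mE)
  (w : 'cV[R]_(n + (mI + mE))) : 'M[R]_(n + (mI + mE)) :=
  jac (Fmu f cI cE 0) w.

Definition muvec (R : realType) (n mI mE : nat) (mu : R) : 'cV[R]_(n + (mI + mE)) :=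
  col_mx 0 (col_mx (const_mx mu) 0).

Definition KKT (R : realType) (n mI mE : nat) (f : 'cV[R]_n -> R)
  (cI : 'cV[R]_n -> 'cV[R]_mI) (cE : 'cV[R]_n -> 'cV[R]_mE)
  (xs : 'cV[R]_n) (lams : 'cV[R]_(mI + mE)) : Prop :=
  [/\ grad f xs - (Amat cI cE xs)^T *m lams = 0,
      cE xs = 0,
      forall i : 'I_mI, 0 <= cI xs i 0,
      forall i : 'I_mI, 0 <= usubmx lams i 0
    & forall i : 'I_mI, cI xs i 0 * usubmx lams i 0 = 0].

Definition active (R : realType) (n mI mE : nat) (cI : 'cV[R]_n -> 'cV[R]_mI)
  (xs : 'cV[R]_n) (j : 'I_(mI + mE)) : Prop :=
  match fintype.split j with
  | inl i => cI xs i 0 = 0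
  | inr _ => True
  end.

Definition LICQ (R : realType) (n mI mE : nat) (cI : 'cV[R]_n -> 'cV[R]_mI)
  (cE : 'cV[R]_n -> 'cV[R]_mE) (xs : 'cV[R]_n) : Prop :=
  forall v : 'cV[R]_(mI + mE),
    (forall j, ~ active cI xs j -> v j 0 = 0) ->
    (Amat cI cE xs)^T *m v = 0 -> v = 0.

Definition strict_compl (R : realType) (n mI : nat) (cI : 'cV[R]_n -> 'cV[R]_mI)
  (mE : nat) (xs : 'cV[R]_n) (lams : 'cV[R]_(mI + mE)) : Prop :=
  forall i : 'I_mI, cI xs i 0 = 0 -> 0 < usubmx lams i 0.

Definition SSOSC (R : realType) (n mI mE : nat) (f : 'cV[R]_n -> R)
  (cI : 'cV[R]_n -> 'cV[R]_mI) (cE : 'cV[R]_n -> 'cV[R]_mE)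
  (xs : 'cV[R]_n) (lams : 'cV[R]_(mI + mE)) : Prop :=
  exists2 om : R, 0 < om &
    forall p : 'cV[R]_n,
      (forall j, active cI xs j -> (Amat cI cE xs *m p) j 0 = 0) ->
      om * enorm p ^+ 2 <= (p^T *m Hlag f cI cE xs lams *m p) 0 0.

Definition is_w0 (R : realType) (n mI mE : nat) (f : 'cV[R]_n -> R)
  (cI : 'cV[R]_n -> 'cV[R]_mI) (cE : 'cV[R]_n -> 'cV[R]_mE) (d : nat)
  (ws : 'cV[R]_(n + (mI + mE)))
  (W0 : 'cV[R]_(n + (mI + mE)) -> 'cV[R]_(n + (mI + mE))) : Prop :=
  W0 0 = ws /\
  exists (Nr Nw : set 'cV[R]_(n + (mI + mE))),
    [/\ open Nr /\ Nr 0, open Nw /\ Nw ws,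
        CkOn d.-1 Nr W0 &
        forall r, Nr r ->
          [/\ Nw (W0 r), Fmu f cI cE 0 (W0 r) = r &
              forall w, Nw w -> Fmu f cI cE 0 w = r -> w = W0 r]].

Definition wmur (R : realType) (n mI mE : nat)
  (W0 : 'cV[R]_(n + (mI + mE)) -> 'cV[R]_(n + (mI + mE)))
  (mu : R) (r : 'cV[R]_(n + (mI + mE))) (rho : R) : 'cV[R]_(n + (mI + mE)) :=
  W0 (rho *: nml r + muvec n mI mE mu).

(* value at rho = 0 of the first-order Taylor polynomial of rho |-> wmur mu r rho
   about rho0 = ||r|| *)
Definition w1 (R : realType) (n mI mE : nat)
  (W0 : 'cV[R]_(n + (mI + mE)) -> 'cV[R]_(n + (mI + mE)))
  (mu : R) (r : 'cV[R]_(n + (mI + mE))) : 'cV[R]_(n + (mI + mE)) :=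
  let rho0 := enorm r in
  wmur W0 mu r rho0 + (0 - rho0) *: derive1 (wmur W0 mu r) rho0.

Definition ThetaId (R : realType) (eps : R -> R) : Prop :=
  exists c1 c2 delta : R, [/\ 0 < c1, 0 < c2, 0 < delta &
    forall mu, 0 < mu < delta -> c1 * mu <= eps mu <= c2 * mu].

(* Main.v *)
Require Import Defs.
From HB Require Import structures.
From mathcomp Require Import all_boot all_order all_algebra.
From mathcomp Require Import all_classical all_reals all_analysis.
Import Order.TTheory GRing.Theory Num.Theory.
Import numFieldNormedType.Exports.
Local Open Scope classical_set_scope.
Local Open Scope ring_scope.

Section Helpers.
Context {R : realType}.

Lemma diff_cV p q (G : 'cV[R]_p -> 'cV[R]_q) w :
  (forall i, differentiable (fun x => G x i 0) w) -> differentiable G w.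
Proof.
move=> H.
have -> : G = \sum_(i < q) (fun x => G x i 0 *: (delta_mx i 0 : 'cV[R]_q)).
  apply/funext => x; rewrite fct_sumE {1}(matrix_sum_delta (G x)).
  by apply: eq_bigr => i _; rewrite big_ord1.
by apply: differentiable_sum => i; apply: differentiableZl.
Qed.

Lemma diff_coord p q (G : 'cV[R]_p -> 'cV[R]_q) w i :
  differentiable G w -> differentiable (fun x => G x i 0) w.
Proof.
move=> dG.
have -> : (fun x => G x i 0) = (fun N : 'cV[R]_q => N i 0) \o G by [].
by apply: differentiable_comp => //; apply: differentiable_coord.
Qed.

Lemma diff_usub p q (w : 'cV[R]_(p + q)) : differentiable (@usubmx R p q 1) w.
Proof.
apply: diff_cV => i.
have -> : (fun x : 'cV[R]_(p+q) => usubmx x i 0) = (fun x => x (lshift q i) 0).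
  by apply/funext => x; rewrite mxE.
exact: differentiable_coord.
Qed.

Lemma diff_dsub p q (w : 'cV[R]_(p + q)) : differentiable (@dsubmx R p q 1) w.
Proof.
apply: diff_cV => i.
have -> : (fun x : 'cV[R]_(p+q) => dsubmx x i 0) = (fun x => x (rshift p i) 0).
  by apply/funext => x; rewrite mxE.
exact: differentiable_coord.
Qed.

Lemma diff_colmx p q r (G1 : 'cV[R]_p -> 'cV[R]_q) (G2 : 'cV[R]_p -> 'cV[R]_r) w :
  differentiable G1 w -> differentiable G2 w ->
  differentiable (fun x => col_mx (G1 x) (G2 x)) w.
Proof.
move=> d1 d2; apply: diff_cV => k.
case: (split_ordP k) => j ->.
  under eq_fun do rewrite col_mxEu. exact: diff_coord.
under eq_fun do rewrite col_mxEd. exact: diff_coord.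
Qed.



Lemma diff_sum' (V : normedModType R) k (g : 'I_k -> V -> R) x :
  (forall i, differentiable (g i) x) -> differentiable (fun y => \sum_(i < k) g i y) x.
Proof.
move=> H; have -> : (fun y => \sum_(i < k) g i y) = \sum_(i < k) g i.
  by apply/funext => y; rewrite fct_sumE.
exact: differentiable_sum.
Qed.

Lemma Ck_diff p (W : normedModType R) k U (g : 'cV[R]_p -> W) :
  CkOn k.+1 U g -> forall x, U x -> differentiable g x.
Proof. by case. Qed.

Lemma Ck_diff2 p (W : normedModType R) k U (g : 'cV[R]_p -> W) j :
  CkOn k.+2 U g -> forall x, U x -> differentiable (fun y => 'D_(ebasis R j) g y) x.
Proof. by case=> _ /(_ j) []. Qed.

End Helpers.
Arguments diff_usub {R p q}.
Arguments diff_dsub {R p q}.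
Arguments Ck_diff {R p W k U g}.
Arguments Ck_diff2 {R p W k U g} j.

Section F0diff.
Context {R : realType} (n mI mE : nat) (f : 'cV[R]_n -> R)
  (cI : 'cV[R]_n -> 'cV[R]_mI) (cE : 'cV[R]_n -> 'cV[R]_mE).
Hypothesis df : forall x, differentiable f x.
Hypothesis dDf : forall j x, differentiable (fun y => 'D_(ebasis R j) f y) x.
Hypothesis dcI : forall i x, differentiable (fun y => cI y i 0) x.
Hypothesis dDcI : forall i j x,
  differentiable (fun y => 'D_(ebasis R j) (fun z => cI z i 0) y) x.
Hypothesis dcE : forall i x, differentiable (fun y => cE y i 0) x.
Hypothesis dDcE : forall i j x,
  differentiable (fun y => 'D_(ebasis R j) (fun z => cE z i 0) y) x.

Lemma dcfun_comp j x : differentiable (fun y => cfun cI cE y j 0) x.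
Proof.
rewrite /cfun; case: (split_ordP j) => j' ->.
  under eq_fun do rewrite col_mxEu. exact: dcI.
under eq_fun do rewrite col_mxEd. exact: dcE.
Qed.

Lemma dcfun x : differentiable (cfun cI cE) x.
Proof. by apply: diff_cV => j; exact: dcfun_comp. Qed.

Lemma Amat_entry x j i :
  Amat cI cE x j i = 'D_(ebasis R i) (fun y => cfun cI cE y j 0) x.
Proof.
rewrite /Amat /jac mxE derive_mx ?mxE //.
apply: diff_derivable. exact: dcfun.
Qed.

Lemma dAmat j i x : differentiable (fun y => Amat cI cE y j i) x.
Proof.
have -> : (fun y => Amat cI cE y j i) =
   (fun y => 'D_(ebasis R i) (fun z => cfun cI cE z j 0) y).
  by apply/funext => y; rewrite Amat_entry.
rewrite /cfun; case: (split_ordP j) => j' ->.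
  have -> : (fun z => col_mx (cI z) (cE z) (lshift mE j') 0) = (fun z => cI z j' 0).
    by apply/funext => z; rewrite col_mxEu.
  exact: dDcI.
have -> : (fun z => col_mx (cI z) (cE z) (rshift mI j') 0) = (fun z => cE z j' 0).
  by apply/funext => z; rewrite col_mxEd.
exact: dDcE.
Qed.

Lemma diff_cu (V : normedModType R) (g : 'cV[R]_n -> V) (w : 'cV[R]_(n + (mI + mE))) :
  differentiable g (usubmx w) -> differentiable (fun w => g (usubmx w)) w.
Proof. move=> H; exact: (differentiable_comp (diff_usub w) H). Qed.

Lemma diff_F0 w : differentiable (Fmu f cI cE 0) w.
Proof.
rewrite /Fmu /=.
apply: diff_colmx; [|apply: diff_colmx].
- apply: diff_cV => i.
  under eq_fun do rewrite !mxE.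
  apply: differentiableB.
    by apply: (@diff_cu _ (fun a => 'D_(ebasis R i) f a) w); exact: dDf.
  apply: diff_sum' => j.
  under eq_fun do rewrite !mxE.
  apply: differentiableM.
    have E : forall a, ('D_(ebasis R i) (cfun cI cE) a) j 0 = Amat cI cE a j i by move=> a; rewrite /Amat /jac mxE.
    under eq_fun do rewrite E.
    by apply: (@diff_cu _ (fun a => Amat cI cE a j i) w); exact: dAmat.
  exact: differentiable_coord.
- apply: diff_cV => i.
  under eq_fun do rewrite !mxE subr0.
  apply: differentiableM.
    by apply: (@diff_cu _ (fun a => cI a i 0) w); exact: dcI.
  exact: differentiable_coord.
- apply: diff_cu; apply: diff_cV => i; exact: dcE.
Qed.

End F0diff.

Section Chain.
Context {R : realType}.

Lemma d_jac p q (G : 'cV[R]_p -> 'cV[R]_q) w u :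
  differentiable G w -> 'd G w u = jac G w *m u.
Proof.
move=> dG.
have Eu : u = \sum_(j < p) u j 0 *: ebasis R j.
  rewrite {1}(matrix_sum_delta u); apply: eq_bigr => j _.
  by rewrite big_ord1.
rewrite {1}Eu linear_sum.
apply/matrixP => i k; rewrite (ord1 k) !mxE summxE.
apply: eq_bigr => j _.
by rewrite linearZ /= -deriveE // !mxE mulrC.
Qed.

Lemma jac_inv P (F W0 : 'cV[R]_P -> 'cV[R]_P) (Nr : set 'cV[R]_P) y0 :
  open Nr -> Nr y0 -> (forall y, Nr y -> F (W0 y) = y) ->
  differentiable W0 y0 -> differentiable F (W0 y0) ->
  jac F (W0 y0) *m jac W0 y0 = 1%:M.
Proof.
move=> oNr Ny0 FW dW dF.
have key : forall v : 'cV[R]_P, (jac F (W0 y0) *m jac W0 y0) *m v = v.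
  move=> v.
  have E1 : 'D_v (F \o W0) y0 = 'D_v id y0.
    apply: near_eq_derive.
    have : nbhs y0 Nr by apply: open_nbhs_nbhs.
    by apply: filterS => y Ny; rewrite /= FW.
  rewrite derive_id deriveE in E1; last exact: differentiable_comp.
  by rewrite diff_comp // /= d_jac // d_jac // mulmxA in E1.
apply/matrixP => i j.
have := congr1 (fun M : 'cV[R]_P => M i 0) (key (delta_mx j 0)).
by rewrite -colE !mxE => ->; rewrite andbT.
Qed.

End Chain.
Section X.
Context {R : realType}.

Lemma derive1_line P (W0 : 'cV[R]_P -> 'cV[R]_P) (u m : 'cV[R]_P) (rho0 : R) :
  derive1 (fun rho : R => W0 (rho *: u + m)) rho0 = 'D_u W0 (rho0 *: u + m).
Proof.
rewrite derive1E /derive; congr lim.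
have -> : (fun h : R => h^-1 *: (W0 ((h *: (1:R) + rho0) *: u + m) - W0 (rho0 *: u + m)))
  = (fun h : R => h^-1 *: (W0 (h *: u + (rho0 *: u + m)) - W0 (rho0 *: u + m))).
  apply/funext => h; congr (_ *: (W0 _ - _)).
  by rewrite [h%:A]mulr1 scalerDl addrA.
congr (_ @ _); apply/funext => h /=.
Qed.

Lemma enorm_coord p (v : 'cV[R]_p) i : `|v i 0| <= enorm v.
Proof.
rewrite /enorm -sqrtr_sqr ler_sqrt; last by apply: sumr_ge0 => j _; exact: sqr_ge0.
rewrite (bigD1 i) //= lerDl; apply: sumr_ge0 => j _; exact: sqr_ge0.
Qed.

Lemma enorm_eq0 p (v : 'cV[R]_p) : enorm v = 0 -> v = 0.
Proof.
move=> /eqP; rewrite sqrtr_eq0 => H.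
have H0 : \sum_(i < p) v i 0 ^+ 2 = 0.
  by apply/eqP; rewrite eq_le H /=; apply: sumr_ge0 => j _; exact: sqr_ge0.
apply/matrixP => i j; rewrite (ord1 j) mxE.
have /psumr_eq0P : \sum_(i < p) v i 0 ^+ 2 = 0 := H0.
move=> /(_ (fun j _ => sqr_ge0 (v j 0)) i isT) /eqP.
by rewrite sqrf_eq0 => /eqP.
Qed.

Lemma enorm_nml p (v : 'cV[R]_p) : enorm v *: nml v = v.
Proof.
rewrite /nml; case: eqP => [->|nz]; first by rewrite scaler0.
rewrite scalerA mulfV ?scale1r //.
by apply/eqP => /enorm_eq0.
Qed.

Lemma nbhs_enorm p (A : set 'cV[R]_p) (x : 'cV[R]_p) : nbhs x A ->
  exists2 e : R, 0 < e & forall v : 'cV[R]_p, enorm (v - x) < e -> A v.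
Proof.
move=> /nbhs_ballP [e e0 sub].
exists e => // v hv; apply: sub.
rewrite -ball_normE /ball_ /=.
rewrite [X in X < _]/Num.Def.normr /= mx_normrE.
apply: bigmax_lt => // -[i j] _ /=; rewrite (ord1 j).
have := @enorm_coord _ (v - x) i; rewrite !mxE distrC => h.
exact: le_lt_trans h hv.
Qed.
End X.
Arguments nbhs_enorm {R p A x}.
Arguments jac_inv {R P F W0 Nr y0}.

Lemma Fmu_shift (R : realType) (n mI mE : nat) (f : 'cV[R]_n -> R)
  (cI : 'cV[R]_n -> 'cV[R]_mI) (cE : 'cV[R]_n -> 'cV[R]_mE) mu w :
  Fmu f cI cE mu w = Fmu f cI cE 0 w - muvec n mI mE mu.
Proof.
rewrite /Fmu /muvec /= !opp_col_mx !add_col_mx !oppr0 !addr0.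
congr col_mx; congr col_mx.
by apply/matrixP => i j; rewrite !mxE addr0.
Qed.
Theorem proposition1 (R : realType) (n mI mE d : nat)
  (f : 'cV[R]_n -> R) (cI : 'cV[R]_n -> 'cV[R]_mI) (cE : 'cV[R]_n -> 'cV[R]_mE)
  (xs : 'cV[R]_n) (lams : 'cV[R]_(mI + mE))
  (W0 : 'cV[R]_(n + (mI + mE)) -> 'cV[R]_(n + (mI + mE)))
  (eps : R -> R) (mu : nat -> R) (w : nat -> 'cV[R]_(n + (mI + mE)))
  (K : set nat) :
  (3 <= d)%N ->
  CkOn d setT f ->
  (forall i : 'I_mI, CkOn d setT (fun x => cI x i 0)) ->
  (forall i : 'I_mE, CkOn d setT (fun x => cE x i 0)) ->
  KKT f cI cE xs lams ->
  LICQ cI cE xs ->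
  strict_compl cI xs lams ->
  SSOSC f cI cE xs lams ->
  is_w0 f cI cE d (col_mx xs lams) W0 ->
  (forall m, 0 < m -> 0 < eps m) ->
  ThetaId eps ->
  (forall k, 0 < mu k) ->
  (forall k, mu k.+1 < mu k) ->
  (forall k, enorm (Fmu f cI cE (mu k) (w k.+1)) <= eps (mu k)) ->
  (forall N, exists k, K k /\ (N <= k)%N) ->
  (forall e : R, 0 < e -> exists N, forall k, K k -> (N <= k)%N ->
      enorm (w k.+1 - col_mx xs lams) < e) ->
  exists N, forall k, K k -> (N <= k)%N ->
    JF f cI cE (w k.+1) \in unitmx /\
    w1 W0 (mu k.+1) (Fmu f cI cE (mu k.+1) (w k.+1))
      = w k.+1 - invmx (JF f cI cE (w k.+1)) *m Fmu f cI cE (mu k.+1) (w k.+1).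
Proof.
Proof.
move=> d3 Cf CI CE _ _ _ _ [W00 [Nr [Nw [[oNr Nr0] [oNw Nws] CW0 HW0]]]] _ _ _ _ _ _ conv.
case: d d3 Cf CI CE CW0 => [|[|[|d']]] // _ Cf CI CE CW0.
have df : forall x, differentiable f x by move=> x; apply: (Ck_diff Cf).
have dDf : forall j x, differentiable (fun y => 'D_(ebasis R j) f y) x.
  by move=> j x; apply: (Ck_diff2 j Cf).
have dcI : forall i x, differentiable (fun y => cI y i 0) x.
  by move=> i x; apply: (Ck_diff (CI i)).
have dDcI : forall i j x,
    differentiable (fun y => 'D_(ebasis R j) (fun z => cI z i 0) y) x.
  by move=> i j x; apply: (Ck_diff2 j (CI i)).
have dcE : forall i x, differentiable (fun y => cE y i 0) x.
  by move=> i x; apply: (Ck_diff (CE i)).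
have dDcE : forall i j x,
    differentiable (fun y => 'D_(ebasis R j) (fun z => cE z i 0) y) x.
  by move=> i j x; apply: (Ck_diff2 j (CE i)).
set F0 := Fmu f cI cE 0.
have dF0 : forall w, differentiable F0 w by move=> w0; apply: diff_F0.
have dW0 : forall y, Nr y -> differentiable W0 y by apply: (Ck_diff CW0).
have FW : forall y, Nr y -> F0 (W0 y) = y by move=> y /HW0 [].
have F0ws : F0 (col_mx xs lams) = 0 by rewrite -W00 FW.
have nb : nbhs (col_mx xs lams) (Nw `&` (F0 @^-1` Nr)).
  apply: filterI; first exact: open_nbhs_nbhs.
  have cF : {for col_mx xs lams, continuous F0}.
    exact: differentiable_continuous.
  apply: cF; rewrite F0ws; exact: open_nbhs_nbhs.
have [e e0 He] := nbhs_enorm nb.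
have [N HN] := conv e e0.
exists N => k Kk Nk.
have [Nww Ny] := He _ (HN k Kk Nk).
set w' := w k.+1 in Nww Ny *.
set y := F0 w' in Ny.
have W0y : W0 y = w'.
  by have [_ _ U] := HW0 y Ny; apply/esym/U.
have JJ := jac_inv oNr Ny FW (dW0 y Ny) (dF0 _).
rewrite W0y in JJ.
have uJ : JF f cI cE w' \in unitmx by have [] := mulmx1_unit JJ.
split => //.
have iJ : invmx (JF f cI cE w') = jac W0 y.
  by rewrite -[RHS](mulKmx uJ) JJ mulmx1.
rewrite iJ Fmu_shift -/F0 -/y.
set r := y - muvec n mI mE (mu k.+1).
rewrite /w1 /wmur derive1_line enorm_nml /r subrK W0y.
rewrite deriveE; last exact: dW0.
rewrite d_jac; last exact: dW0.
by rewrite sub0r scaleNr scalemxAr enorm_nml.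
Qed.
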